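(* Let $L\subset\mathbb{R}^3$ be a link (finite disjoint union of closed curves) of positive thickness. Then $L$ is regular. If moreover $L$ is $G$-invariant for a subgroup $G\subset\operatorname{O}(3)$, then $L$ is $G$-regular.
   Context: The thickness $\operatorname{Thi}(L)$ is the reach of $L$: the supremum of $\epsilon$ such that every point within distance $\epsilon$ of $L$ has a unique nearest point on $L$. A variation field $\eta$ is the initial velocity field of a smooth family $\phi^t$ ($t\in(-\epsilon,\epsilon)$) of $C^2$ diffeomorphisms of $\mathbb{R}^3$ with $\phi^0=\mathrm{Id}$; $\delta_\eta\operatorname{Thi}(L):=\frac{d}{dt^+}\operatorname{Thi}(\phi^t(L))|_{t=0}$. $L$ is regular if there is a variation field $\eta$ (a thickening field) with $\delta_\eta\operatorname{Thi}(L)>0$. $L$ is $G$-invariant if $gL=L$ for all $g\in G$; a field $\eta$ is $G$-invariant if $\eta(gx)=g\,\eta(x)$ for all $g\in G$, $x\in\mathbb{R}^3$. A $G$-invariant $L$ is $G$-regular if it has a $G$-invariant thickening field. *)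

(* Defs.v *)
From HB Require Import structures.
From mathcomp Require Import all_boot all_order all_algebra.
From mathcomp Require Import all_classical all_reals all_analysis.
Set Implicit Arguments. Unset Strict Implicit. Unset Printing Implicit Defensive.
Import Order.TTheory GRing.Theory Num.Theory numFieldNormedType.Exports.
Local Open Scope classical_set_scope.
Local Open Scope ring_scope.

Section Defs.
Variable R : realType.
Notation V3 := 'rV[R]_3.

(* Euclidean norm on R^3 (the canonical norm on matrices is the max norm,
   which we only use for the topology / differentiability, where all norms
   agree). *)
Definition enorm (x : V3) : R := Num.sqrt (\sum_(i < 3) x ord0 i ^+ 2).

Definition nearest (L : set V3) (x y : V3) : Prop :=
  L y /\ forall z, L z -> enorm (x - y) <= enorm (x - z).

Definition unique_nearest_within (L : set V3) (e : R) : Prop :=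
  forall x, (exists y, L y /\ enorm (x - y) < e) ->
    exists y, nearest L x y /\ forall y', nearest L x y' -> y' = y.

(* thickness = reach, as an extended real *)
Definition Thi (L : set V3) : \bar R :=
  ereal_sup [set e%:E | e in [set e : R | 0 <= e /\ unique_nearest_within L e]].

(* real-valued thickness (finite for links) *)
Definition thi (L : set V3) : R := fine (Thi L).

Definition closed_curve (C : set V3) : Prop :=
  exists g : R -> V3, continuous g /\ (forall s, g (s + 1) = g s) /\
    {in `[0, 1[%classic &, injective g} /\ C = g @` `[0, 1[%classic.

Definition link (L : set V3) : Prop :=
  exists (n : nat) (C : 'I_n -> set V3), (0 < n)%N /\
    (forall i, closed_curve (C i)) /\
    (forall i j, i != j -> C i `&` C j = set0) /\
    L = \bigcup_(i in setT) C i.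

Section Ck.
Variables (U W : normedModType R).
Definition C1_on (D : set U) (f : U -> W) : Prop :=
  forall x, D x -> differentiable f x /\ forall v, {for x, continuous ('D_v f)}.
Definition C2_on (D : set U) (f : U -> W) : Prop :=
  C1_on D f /\ forall v, C1_on D ('D_v f).
End Ck.

Definition C2_diffeo (f : V3 -> V3) : Prop :=
  C2_on setT f /\ exists g : V3 -> V3, cancel f g /\ cancel g f /\ C2_on setT g.

Definition diffeo_family (phi : R -> V3 -> V3) : Prop :=
  exists eps : R, 0 < eps /\
    (forall t, `|t| < eps -> C2_diffeo (phi t)) /\
    phi 0 = id /\
    C2_on [set p : R * V3 | `|p.1| < eps] (fun p : R * V3 => phi p.1 p.2).

Definition initial_velocity (phi : R -> V3 -> V3) (eta : V3 -> V3) : Prop :=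
  forall x, derivable (fun t => phi t x) 0 1 /\
            eta x = 'D_1 (fun t => phi t x) 0.

Definition variation_field (eta : V3 -> V3) : Prop :=
  exists phi, diffeo_family phi /\ initial_velocity phi eta.

Definition thickening_field (L : set V3) (eta : V3 -> V3) : Prop :=
  exists phi, diffeo_family phi /\ initial_velocity phi eta /\
    exists d : R, 0 < d /\
      (fun t => (thi (phi t @` L) - thi L) / t) @ 0^'+ --> d.

Definition regular (L : set V3) : Prop := exists eta, thickening_field L eta.

(* orthogonal group O(3), acting on (row) vectors by x |-> g x *)
Definition orth3 (g : 'M[R]_3) : Prop := g *m g^T = 1%:M.
Definition act (g : 'M[R]_3) (x : V3) : V3 := x *m g^T.

Definition subgroup_O3 (G : set 'M[R]_3) : Prop :=
  G `<=` orth3 /\ G 1%:M /\ (forall g h, G g -> G h -> G (g *m h)) /\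
  (forall g, G g -> G g^T).

Definition G_invariant_set (G : set 'M[R]_3) (L : set V3) : Prop :=
  forall g, G g -> act g @` L = L.

Definition G_invariant_field (G : set 'M[R]_3) (eta : V3 -> V3) : Prop :=
  forall g x, G g -> eta (act g x) = act g (eta x).

Definition G_regular (G : set 'M[R]_3) (L : set V3) : Prop :=
  exists eta, G_invariant_field G eta /\ thickening_field L eta.
End Defs.

(* Main.v *)
Require Import Defs.
From HB Require Import structures.
From mathcomp Require Import all_boot all_order all_algebra.
From mathcomp Require Import all_classical all_reals all_analysis.
From mathcomp Require Import ring lra.
Import Order.TTheory GRing.Theory Num.Theory numFieldNormedType.Exports.
Local Open Scope classical_set_scope.
Local Open Scope ring_scope.
Set Implicit Arguments. Unset Strict Implicit. Unset Printing Implicit Defensive.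

Section Basic.
Variable R : realType.
Notation V := 'rV[R]_3.

Definition sq (v : V) : R := \sum_(i < 3) v ord0 i ^+ 2.
Definition dot (u v : V) : R := \sum_(i < 3) u ord0 i * v ord0 i.

Lemma sum3 (F : 'I_3 -> R) : \sum_(i < 3) F i = F 0 + F 1 + F 2.
Proof. rewrite !big_ord_recl big_ord0 addr0 addrA; congr (F _ + F _ + F _); exact: val_inj. Qed.

Lemma sq_ge0 (v : V) : 0 <= sq v.
Proof. rewrite /sq sum3; nra. Qed.

Lemma enormE (v : V) : enorm v = Num.sqrt (sq v).
Proof. by []. Qed.

Lemma enorm_ge0 (v : V) : 0 <= enorm v.
Proof. exact: sqrtr_ge0. Qed.

Lemma enorm_sq (v : V) : enorm v ^+ 2 = sq v.
Proof. by rewrite enormE sqr_sqrtr // sq_ge0. Qed.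

Lemma cauchy_schwarz (u v : V) : dot u v ^+ 2 <= sq u * sq v.
Proof. rewrite /dot /sq !sum3.
set a0 := u _ 0; set a1 := u _ 1; set a2 := u _ 2.
set b0 := v _ 0; set b1 := v _ 1; set b2 := v _ 2.
have H : sq u * sq v - dot u v ^+2 = (a0*b1-a1*b0)^+2 + (a0*b2-a2*b0)^+2 + (a1*b2-a2*b1)^+2.
  rewrite /dot /sq !sum3 -/a0 -/a1 -/a2 -/b0 -/b1 -/b2. ring.
rewrite /dot /sq !sum3 in H.
by rewrite -subr_ge0 H ?addr_ge0 ?sqr_ge0.
Qed.


Lemma sqE (v : V) : sq v = v ord0 0 ^+ 2 + v ord0 1 ^+ 2 + v ord0 2 ^+ 2.
Proof. by rewrite /sq sum3. Qed.
Lemma dotE (u v : V) : dot u v = u ord0 0 * v ord0 0 + u ord0 1 * v ord0 1 + u ord0 2 * v ord0 2.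
Proof. by rewrite /dot sum3. Qed.

Lemma coord_le_sq (v : V) i : v ord0 i ^+ 2 <= sq v.
Proof.
rewrite sqE; have : i = 0 \/ i = 1 \/ i = 2.
  case: i => [[|[|[|k]]] Hk]; [left|right;left|right;right|by []]; exact: val_inj.
by case=> [->|[->|->]]; nra.
Qed.

Lemma coord_le_enorm (v : V) i : `|v ord0 i| <= enorm v.
Proof.
rewrite enormE -sqrtr_sqr ler_sqrt ?sq_ge0 //; exact: coord_le_sq.
Qed.

Lemma mxnorm_coord (v : V) i : `|v ord0 i| <= `|v|.
Proof.
rewrite [X in _ <= X]/Num.norm /= mx_normrE.
exact: (le_bigmax _ (fun ij : 'I_1 * 'I_3 => `|v ij.1 ij.2|) (ord0, i)).
Qed.

Lemma mxnorm_le_enorm (v : V) : `|v| <= enorm v.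
Proof.
rewrite [X in X <= _]/Num.norm /= mx_normrE.
apply: bigmax_le; first exact: enorm_ge0.
move=> [i j] _ /=; have -> : i = ord0 by apply: val_inj; case: i => [[]].
exact: coord_le_enorm.
Qed.

Lemma enorm_le_mxnorm (v : V) : enorm v <= 3 * `|v|.
Proof.
have h0 : 0 <= `|v| by [].
rewrite enormE -(@ger0_norm _ (3 * `|v|)) ?mulr_ge0 // -sqrtr_sqr ler_sqrt ?sqr_ge0 //.
have := mxnorm_coord v 0; have := mxnorm_coord v 1; have := mxnorm_coord v 2.
rewrite sqE; set a := v _ 0; set b := v _ 1; set c := v _ 2.
move=> hc hb ha.
have ha2 : a ^+ 2 <= `|v| ^+ 2 by rewrite -real_normK ?num_real // lerXn2r ?nnegrE.
have hb2 : b ^+ 2 <= `|v| ^+ 2 by rewrite -real_normK ?num_real // lerXn2r ?nnegrE.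
have hc2 : c ^+ 2 <= `|v| ^+ 2 by rewrite -real_normK ?num_real // lerXn2r ?nnegrE.
nra.
Qed.


Ltac crd := rewrite ?sqE ?dotE ?mxE; ring.

Lemma sqD (u v : V) : sq (u + v) = sq u + 2 * dot u v + sq v. Proof. rewrite !sqE dotE !mxE; ring. Qed.
Lemma sqB (u v : V) : sq (u - v) = sq u - 2 * dot u v + sq v. Proof. rewrite !sqE dotE !mxE; ring. Qed.
Lemma sqZ a (v : V) : sq (a *: v) = a ^+ 2 * sq v. Proof. rewrite !sqE !mxE; ring. Qed.
Lemma sqN (v : V) : sq (- v) = sq v. Proof. rewrite !sqE !mxE; ring. Qed.
Lemma sq0 : sq (0 : V) = 0. Proof. rewrite !sqE !mxE; ring. Qed.
Lemma dotC (u v : V) : dot u v = dot v u. Proof. rewrite !dotE; ring. Qed.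
Lemma dotDl (u v w : V) : dot (u + v) w = dot u w + dot v w. Proof. rewrite !dotE !mxE; ring. Qed.
Lemma dotDr (u v w : V) : dot w (u + v) = dot w u + dot w v. Proof. rewrite !dotE !mxE; ring. Qed.
Lemma dotBl (u v w : V) : dot (u - v) w = dot u w - dot v w. Proof. rewrite !dotE !mxE; ring. Qed.
Lemma dotBr (u v w : V) : dot w (u - v) = dot w u - dot w v. Proof. rewrite !dotE !mxE; ring. Qed.
Lemma dotNl (u w : V) : dot (- u) w = - dot u w. Proof. rewrite !dotE !mxE; ring. Qed.
Lemma dotNr (u w : V) : dot w (- u) = - dot w u. Proof. rewrite !dotE !mxE; ring. Qed.
Lemma dotZl a (u w : V) : dot (a *: u) w = a * dot u w. Proof. rewrite !dotE !mxE; ring. Qed.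
Lemma dotZr a (u w : V) : dot w (a *: u) = a * dot w u. Proof. rewrite !dotE !mxE; ring. Qed.
Lemma dotvv (u : V) : dot u u = sq u. Proof. rewrite !dotE sqE; ring. Qed.
Lemma dot0l (u : V) : dot 0 u = 0. Proof. rewrite !dotE !mxE; ring. Qed.
Lemma dot0r (u : V) : dot u 0 = 0. Proof. rewrite !dotE !mxE; ring. Qed.

Lemma sq_eq0 (v : V) : sq v = 0 -> v = 0.
Proof.
move=> h; apply/rowP => i; rewrite mxE.
have := coord_le_sq v i; rewrite h => h1.
have : v ord0 i ^+ 2 = 0 by apply/eqP; rewrite eq_le h1 sqr_ge0.
by move/eqP; rewrite sqrf_eq0 => /eqP ->.
Qed.

Lemma dot_le (u v : V) : dot u v <= enorm u * enorm v.
Proof.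
have h := cauchy_schwarz u v.
have hu := enorm_ge0 u; have hv := enorm_ge0 v.
rewrite -enorm_sq -(enorm_sq v) -exprMn in h.
have hp := mulr_ge0 hu hv.
case: (lerP (dot u v) (enorm u * enorm v)) => // hlt.
have : (enorm u * enorm v) ^+ 2 < dot u v ^+ 2 by rewrite ltr_pXn2r // ?nnegrE // (le_trans hp (ltW hlt)).
by rewrite ltNge h.
Qed.

Lemma dot_abs_le (u v : V) : `|dot u v| <= enorm u * enorm v.
Proof.
rewrite ler_norml dot_le andbT.
have := dot_le (- u) v; rewrite dotNl.
have -> : enorm (- u) = enorm u by rewrite !enormE sqN.
by rewrite lerNl.
Qed.

Lemma enorm_tri (u v : V) : enorm (u + v) <= enorm u + enorm v.
Proof.
have hu := enorm_ge0 u; have hv := enorm_ge0 v.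
rewrite enormE -(@ger0_norm _ (enorm u + enorm v)) ?addr_ge0 //.
rewrite -sqrtr_sqr ler_sqrt ?sqr_ge0 // sqD -(enorm_sq u) -(enorm_sq v).
have := dot_le u v; nra.
Qed.

Lemma enormN (v : V) : enorm (- v) = enorm v.
Proof. by rewrite !enormE sqN. Qed.
Lemma enormB (u v : V) : enorm (u - v) = enorm (v - u).
Proof. by rewrite -enormN opprB. Qed.
Lemma enormZ a (v : V) : enorm (a *: v) = `|a| * enorm v.
Proof. by rewrite !enormE sqZ sqrtrM ?sqr_ge0 // sqrtr_sqr. Qed.
Lemma enorm0 : enorm (0 : V) = 0.
Proof. by rewrite enormE sq0 sqrtr0. Qed.

Lemma enorm_tri3 (x y z : V) : enorm (x - z) <= enorm (x - y) + enorm (y - z).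
Proof. have -> : x - z = (x - y) + (y - z) by rewrite addrA subrK. exact: enorm_tri. Qed.

Lemma le_enorm_sq (u v : V) : (enorm u <= enorm v) = (sq u <= sq v).
Proof. by rewrite !enormE ler_sqrt ?sq_ge0. Qed.
Lemma lt_enorm_sq (u v : V) : (enorm u < enorm v) = (sq u < sq v).
Proof.
rewrite !enormE; case: (eqVneq (sq v) 0) => h.
  by rewrite h sqrtr0 !ltNge sqrtr_ge0 sq_ge0.
by rewrite ltr_sqrt // lt_def h sq_ge0.
Qed.

End Basic.



Section Cont.
Variable R : realType.
Notation V := 'rV[R]_3.

Lemma nbhs_enorm (x : V) (P : set V) : (exists2 d, 0 < d & forall y, enorm (x - y) < d -> P y) -> nbhs x P.
Proof.
move=> [d d0 Hd]; rewrite -filter_from_norm_nbhs.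
exists (d / 3); first by rewrite /= divr_gt0.
move=> y /= hy; apply: Hd; apply: (le_lt_trans (enorm_le_mxnorm _)).
by rewrite -ltr_pdivlMl // mulrC.
Qed.

Lemma enorm_nbhs (x : V) (P : set V) : nbhs x P -> exists2 d, 0 < d & forall y, enorm (x - y) < d -> P y.
Proof.
rewrite -filter_from_norm_nbhs => -[d d0 Hd]; exists d => // y hy; apply: Hd => /=.
exact: (le_lt_trans (mxnorm_le_enorm _)).
Qed.

Lemma cont_eps (f : V -> R) x :
  (forall e, 0 < e -> exists2 d, 0 < d & forall y, enorm (x - y) < d -> `|f x - f y| < e) ->
  {for x, continuous f}.
Proof.
move=> H B; rewrite -filter_from_norm_nbhs => -[e e0 He].
apply: nbhs_enorm; have [d d0 Hd] := H e e0; exists d => // y /Hd hy; exact: He.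
Qed.

Lemma eps_cont (g : R -> V) s : {for s, continuous g} ->
  forall e, 0 < e -> exists2 d, 0 < d & forall t, `|s - t| < d -> enorm (g s - g t) < e.
Proof.
move=> H e e0.
have : nbhs (g s) [set z | enorm (g s - z) < e] by apply: nbhs_enorm; exists e.
move/H; rewrite -filter_from_norm_nbhs => -[d d0 Hd].
by exists d => // t ht; apply: Hd.
Qed.

Lemma closed_eps (A : set V) :
  (forall y, (forall e, 0 < e -> exists z, A z /\ enorm (y - z) < e) -> A y) -> closed A.
Proof.
move=> H y hy; apply: H => e e0.
have : nbhs y [set z | enorm (y - z) < e].
  by apply: nbhs_enorm; exists e.
by move/hy => [z [Az /= hz]]; exists z.
Qed.

Lemma eps_closed (A : set V) y : closed A ->
  (forall e, 0 < e -> exists z, A z /\ enorm (y - z) < e) -> A y.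
Proof.
move=> cA H; apply: cA => B /enorm_nbhs [d d0 Hd].
have [z [Az hz]] := H d d0; exists z; split => //; exact: Hd.
Qed.

End Cont.

Section Link.
Variable R : realType.
Notation V := 'rV[R]_3.

Lemma img_compact (g : R -> V) (a b : R) : continuous g -> compact (g @` `[a, b]).
Proof. move=> cg; apply: continuous_compact; [exact: continuous_subspaceT | exact: segment_compact]. Qed.

Lemma img_closed (g : R -> V) (a b : R) : continuous g -> closed (g @` `[a, b]).
Proof. move=> cg; apply: compact_closed; [exact: norm_hausdorff | exact: img_compact]. Qed.

Lemma curve01 (g : R -> V) : (forall s, g (s + 1) = g s) ->
  g @` `[0, 1[ = g @` `[0, 1].
Proof.
move=> gp; apply/seteqP; split => _ [s hs <-].
  by exists s => //; move: hs; rewrite /= !in_itv /= => /andP[-> /ltW ->].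
move: hs; rewrite /= !in_itv /= => /andP[h0 h1].
case: (eqVneq s 1) => [->|s1].
  by exists 0; rewrite ?in_itv /= ?lexx ?ltr01 // -[1 in RHS]add0r gp.
by exists s => //; rewrite /= in_itv /= h0 lt_neqAle s1 h1.
Qed.

Lemma closed_curve_compact (C : set V) : closed_curve C -> compact C.
Proof. by move=> [g [cg [gp [_ ->]]]]; rewrite curve01 //; exact: img_compact. Qed.

Lemma bigcup_big n (C : 'I_n -> set V) :
  \bigcup_(i in setT) C i = \big[setU/set0]_(i <- index_enum 'I_n) C i.
Proof.
apply/seteqP; split.
  move=> x [i _ Cx]; rewrite (bigD1_seq i) ?mem_index_enum ?index_enum_uniq //.
  by left.
apply: (big_ind (fun S => S `<=` \bigcup_(i in setT) C i)) => //.
  by move=> A B hA hB x [/hA|/hB].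
by move=> i _ x Cx; exists i.
Qed.

Lemma link_compact (L : set V) : link L -> compact L.
Proof.
move=> [n [C [_ [hC [_ ->]]]]]; rewrite bigcup_big.
by apply: bigsetU_compact => i _; exact: closed_curve_compact.
Qed.

Lemma link_closed (L : set V) : link L -> closed L.
Proof. move=> hL; apply: compact_closed; [exact: norm_hausdorff|exact: link_compact]. Qed.

Lemma link_nonempty (L : set V) : link L -> exists z, L z.
Proof.
move=> [n [C [n0 [hC [_ ->]]]]].
have [g [_ [_ [_ hg]]]] := hC (Ordinal n0).
by exists (g 0), (Ordinal n0) => //; rewrite hg; exists 0 => //; rewrite /= in_itv /= lexx ltr01.
Qed.

Lemma link_bounded (L : set V) : link L -> exists M, forall z, L z -> enorm z <= M.
Proof.
move=> /link_compact /compact_bounded [M [_ HM]].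
exists (3 * (M + 1)) => z Lz; apply: (le_trans (enorm_le_mxnorm _)).
rewrite ler_pM2l //; apply: HM => //; by rewrite ltrDl.
Qed.

End Link.

Section Cheb.
Variable R : realType.
Notation V := 'rV[R]_3.

Lemma enorm_rev (u v : V) : `|enorm u - enorm v| <= enorm (u - v).
Proof.
rewrite ler_norml; apply/andP; split.
  rewrite lerBrDl -lerBrDr opprK addrC; have := enorm_tri3 v u 0.
  by rewrite !subr0 enormB.
rewrite lerBlDr; have := enorm_tri3 u v 0; rewrite !subr0.
by rewrite addrC.
Qed.

Lemma nearest_sq (L : set V) x y : nearest L x y -> forall z, L z -> sq (x - y) <= sq (x - z).
Proof. by move=> [_ H] z /H; rewrite le_enorm_sq. Qed.

Lemma bounded_enorm (B : set V) rho : (forall x, B x -> enorm x <= rho) -> bounded_set B.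
Proof.
move=> H; exists rho; split; first exact: num_real.
move=> M hM x Bx; apply: (le_trans (mxnorm_le_enorm _)).
exact: (le_trans (H _ Bx) (ltW hM)).
Qed.

Variable L : set V.
Hypothesis cL : compact L.
Hypothesis cheb : forall x, exists y, nearest L x y /\ forall y', nearest L x y' -> y' = y.

Definition pi x : V := proj1_sig (cid (cheb x)).
Lemma pi_nearest x : nearest L x (pi x).
Proof. exact: (proj1 (proj2_sig (cid (cheb x)))). Qed.
Lemma pi_uniq x y : nearest L x y -> y = pi x.
Proof. exact: (proj2 (proj2_sig (cid (cheb x))) y). Qed.
Lemma pi_L x : L (pi x).
Proof. by case: (pi_nearest x). Qed.
Lemma pi_le x z : L z -> enorm (x - pi x) <= enorm (x - z).
Proof. by case: (pi_nearest x) => _; apply. Qed.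

Lemma closedL : closed L.
Proof. apply: compact_closed => //; exact: norm_hausdorff. Qed.

Lemma pi_cont x e : 0 < e -> exists2 d, 0 < d & forall x', enorm (x - x') < d -> enorm (pi x - pi x') < e.
Proof.
move=> e0.
pose K := L `&` [set z | e <= enorm (pi x - z)].
have [K0|KN0] := pselect (K = set0); last first.
  have [c0 Kc0] : exists c, K c by apply/set0P/eqP.
- have clB : closed [set z | e <= enorm (pi x - z)].
    apply: closed_eps => y H /=; rewrite leNgt; apply/negP => hlt.
    have eta0 : 0 < e - enorm (pi x - y) by rewrite subr_gt0.
    have [z [/= hz1 hz2]] := H _ eta0.
    have := enorm_tri3 (pi x) y z; lra.
  have cK : compact K by apply: compact_closedI.
  have cf : {within K, continuous (fun z => enorm (x - z))}.
    apply: continuous_subspaceT => z; apply: cont_eps => h h0; exists h => // z' hz.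
    apply: (le_lt_trans (enorm_rev _ _)).
    by rewrite opprB addrC subrKA enormB.
  have [c /set_mem [Lc hce] hc] := EVT_min_rV (ex_intro _ c0 Kc0) cK cf.
  set r := enorm (x - pi x); set m := enorm (x - c).
  have rm : r < m.
    rewrite lt_neqAle pi_le // andbT; apply/eqP => rm.
    have nc : nearest L x c by split => // z Lz; rewrite -/m -rm; exact: pi_le.
    move: hce; rewrite /= -(pi_uniq nc) subrr enorm0; lra.
  exists ((m - r) / 2); first by rewrite divr_gt0 // subr_gt0.
  move=> x' hx'; rewrite ltNge; apply/negP => hle.
  have hK : K (pi x') by split => //; exact: pi_L.
  have := hc _ (mem_set hK) => /= hm.
  have h1 := enorm_tri3 x x' (pi x').
  have h2 := pi_le x' (pi_L x).
  have h3 := enorm_tri3 x' x (pi x).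
  rewrite (enormB x' x) in h3.
  move: rm hx' hm; rewrite /r /m => rm hx' hm.
  lra.

- exists 1 => // x' _; rewrite ltNge; apply/negP => he.
  have : K (pi x') by split => //; exact: pi_L.
  by rewrite K0.
Qed.

Lemma L_bound : exists M, 0 <= M /\ forall z, L z -> enorm z <= M.
Proof.
have [M [_ HM]] := compact_bounded cL.
exists (3 * (`|M| + 1)); split; first by rewrite mulr_ge0 // addr_ge0.
move=> z Lz; apply: (le_trans (enorm_le_mxnorm _)).
rewrite ler_pM2l //; apply: HM => //.
by rewrite (le_lt_trans (ler_norm M)) // ltrDl.
Qed.

Definition fL x := dot x (pi x) - sq (pi x) / 2.

Lemma fL_ge x z : L z -> dot x z - sq z / 2 <= fL x.
Proof.
move=> Lz; have := pi_le x Lz; rewrite le_enorm_sq !sqB /fL.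
rewrite (dotC x (pi x)); lra.
Qed.

Lemma fL_lip M x x' : (forall z, L z -> enorm z <= M) -> fL x' - fL x <= M * enorm (x' - x).
Proof.
move=> HM; have := fL_ge x (pi_L x').
have := dot_le (x' - x) (pi x'); rewrite dotBl.
have := HM _ (pi_L x'); have := enorm_ge0 (x' - x).
rewrite /fL; nra.
Qed.

Lemma cont_dot (u : V) : continuous (fun x => dot u x).
Proof.
move=> x; apply: cont_eps => e e0.
exists (e / (enorm u + 1)); first by rewrite divr_gt0 // ltr_wpDl ?enorm_ge0.
move=> x' hx; rewrite -dotBr; apply: (le_lt_trans (dot_abs_le _ _)).
rewrite ltr_pdivlMr ?ltr_wpDl ?enorm_ge0 // in hx.
have hu := enorm_ge0 u; have hx0 := enorm_ge0 (x - x').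
have : enorm u * enorm (x - x') <= enorm (x - x') * (enorm u + 1) by nra.
lra.
Qed.

Lemma cont_sq : continuous (fun x : V => sq x).
Proof.
move=> x; apply: cont_eps => e e0.
set c := 2 * enorm x + 1.
have c0 : 0 < c by rewrite /c ltr_wpDl ?mulr_ge0 ?enorm_ge0.
exists (Num.min 1 (e / c)); first by rewrite lt_min ltr01 divr_gt0.
move=> x' hx; rewrite lt_min in hx; case/andP: hx => hx1 hx2.
have -> : sq x - sq x' = dot (x - x') (x + x').
  by rewrite !sqE !dotE !mxE; ring.
apply: (le_lt_trans (dot_abs_le _ _)).
have h1 : enorm (x + x') <= 2 * enorm x + enorm (x - x').
  have -> : x + x' = (x + x) - (x - x') by apply/rowP => i; rewrite !mxE; ring.
  apply: (le_trans (enorm_tri _ _)); rewrite enormN.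
  have -> : x + x = 2 *: x by apply/rowP => i; rewrite !mxE; ring.
  by rewrite enormZ ger0_norm.
have h2 : enorm (x - x') * c < e by rewrite -ltr_pdivlMr.
have hx0 := enorm_ge0 (x - x'); have hxp := enorm_ge0 (x + x').
have : enorm (x - x') * enorm (x + x') <= enorm (x - x') * c.
  by rewrite ler_wpM2l // /c; lra.
lra.
Qed.

Lemma cont_fL : continuous fL.
Proof.
have [M [M0 HM]] := L_bound.
move=> x; apply: cont_eps => e e0.
exists (e / (M + 1)); first by rewrite divr_gt0 // ltr_wpDl.
move=> x' hx; rewrite ltr_pdivlMr ?ltr_wpDl // in hx.
have h1 := fL_lip x x' HM; have h2 := fL_lip x' x HM.
rewrite enormB in h1; have h0 := enorm_ge0 (x - x').
rewrite ltr_norml; apply/andP; split.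
- have : M * enorm (x - x') <= (M + 1) * enorm (x - x') by rewrite ler_wpM2r //; lra.
  lra.
- have : M * enorm (x - x') <= (M + 1) * enorm (x - x') by rewrite ler_wpM2r //; lra.
  lra.
Qed.


Lemma cheb_conv a b lam : L a -> L b -> 0 <= lam -> lam <= 1 ->
  L ((1 - lam) *: a + lam *: b).
Proof.
move=> La Lb l0 l1.
set y := (1 - lam) *: a + lam *: b.
apply: (eps_closed closedL) => eta eta0.
set K := (1 - lam) * sq a + lam * sq b.
have K0 : 0 <= K by rewrite /K addr_ge0 // mulr_ge0 ?sq_ge0 // subr_ge0.
set eps := eta ^+ 2 / (K + 1).
have eps0 : 0 < eps by rewrite /eps divr_gt0 ?exprn_gt0 // ltr_wpDl.
pose h x := fL x - dot y x + eps / 2 * sq x.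
have hlow x : - K / 2 + eps / 2 * sq x <= h x.
  have ha := fL_ge x La; have hb := fL_ge x Lb.
  rewrite /h /K.
  have -> : dot y x = (1 - lam) * dot x a + lam * dot x b.
    by rewrite /y dotDl !dotZl !(dotC _ x).
  have : (1 - lam) * (dot x a - sq a / 2) + lam * (dot x b - sq b / 2) <= fL x.
    have e1 : (1 - lam) * (dot x a - sq a / 2) <= (1 - lam) * fL x.
      by rewrite ler_wpM2l // subr_ge0.
    have e2 : lam * (dot x b - sq b / 2) <= lam * fL x by rewrite ler_wpM2l.
    have -> : fL x = (1 - lam) * fL x + lam * fL x by ring.
    exact: lerD.
  lra.
have h0 : h 0 <= 0.
  rewrite /h /fL dot0l dot0r sq0 mulr0 subr0 add0r addr0.
  by rewrite oppr_le0 divr_ge0 ?sq_ge0.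
set rho := Num.sqrt (K / eps).
pose B := [set x : V | enorm x <= rho].
have clB : closed B.
  apply: closed_eps => x H; rewrite /B /=; rewrite leNgt; apply/negP => hlt.
  have eta1 : 0 < enorm x - rho by rewrite subr_gt0.
  have [z [/= hz1 hz2]] := H _ eta1.
  move: hz1; rewrite /B /= => hz1.
  have := enorm_tri3 x z 0; rewrite !subr0; lra.
have cB : compact B by apply: bounded_closed_compact => //; exact: (@bounded_enorm B rho (fun x hx => hx)).
have B0 : B 0 by rewrite /B /= enorm0 sqrtr_ge0.
have cont_h : {within B, continuous h}.
  apply: continuous_subspaceT => x.
  apply: (@continuousD _ _ _ (fun x => fL x - dot y x) (fun x => eps / 2 * sq x)).
    apply: (@continuousB _ _ _ fL (fun x => dot y x)).
      exact: cont_fL.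
    exact: cont_dot.
  apply: (@continuousM _ _ (fun=> eps / 2) (fun x => sq x)).
    exact: cst_continuous.
  exact: cont_sq.
have [xs /set_mem Bxs hxs] := EVT_min_rV (ex_intro _ 0 B0) cB cont_h.
have hmin x : h xs <= h x.
  have [Bx|nBx] := pselect (B x); first exact: hxs (mem_set Bx).
  apply: (le_trans (hxs _ (mem_set B0))); apply: (le_trans h0).
  apply: (le_trans _ (hlow x)).
  have : K / eps < sq x.
    have hlt : rho < enorm x by rewrite ltNge; apply/negP.
    have sx0 : 0 < sq x.
      rewrite lt_def sq_ge0 andbT; apply/eqP => h0'; move: hlt.
      rewrite enormE h0' sqrtr0 /rho; have := @sqrtr_ge0 _ (K / eps); lra.
    by move: hlt; rewrite /rho enormE ltr_sqrt.
  rewrite ltr_pdivrMr // => hK.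
  have : K <= eps * sq x by rewrite mulrC; exact: ltW.
  lra.
set v := pi xs - y + eps *: xs.
have v0 : v = 0.
  apply: sq_eq0; apply/eqP; rewrite eq_le sq_ge0 andbT leNgt; apply/negP => sv0.
  set nv := enorm v.
  have nv0 : 0 < nv by rewrite /nv enormE sqrtr_gt0.
  have sqv : sq v = nv ^+ 2 by rewrite enorm_sq.
  have nv2 : 0 < nv / 2 by rewrite divr_gt0.
  have [d d0 hd] := pi_cont xs nv2.
  set t := Num.min (d / (2 * nv)) (1 / (2 * eps)).
  have a1 : 0 < d / (2 * nv) by apply: divr_gt0 => //; apply: mulr_gt0.
  have a2 : 0 < 1 / (2 * eps) by apply: divr_gt0 => //; apply: mulr_gt0.
  have t0 : 0 < t by rewrite /t lt_min a1 a2.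
  have td : t * nv < d.
    have : t <= d / (2 * nv) by rewrite ge_min lexx.
    rewrite ler_pdivlMr ?mulr_gt0 // => h1.
    have : t * nv * 2 = t * (2 * nv) by ring.
    have : 0 < t * nv by rewrite mulr_gt0.
    lra.
  have te : eps * t <= 1 / 2.
    have : t <= 1 / (2 * eps) by rewrite ge_min lexx orbT.
    have e20 : 0 < 2 * eps by apply: mulr_gt0.
    rewrite ler_pdivlMr // => h1.
    have : eps * t * 2 = t * (2 * eps) by ring.
    lra.
  set x1 := xs + t *: (- v).
  have hx1 : enorm (xs - x1) < d.
    have -> : xs - x1 = t *: v by apply/rowP => i; rewrite /x1 !mxE; ring.
    by rewrite enormZ ger0_norm ?ltW.
  set z := pi x1.
  have hz : enorm (pi xs - z) < nv / 2 := hd _ hx1.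
  have hm := hmin x1.
  have f1 := fL_ge xs (pi_L x1).
  have fx1 : fL x1 = dot x1 z - sq z / 2 by [].
  have e1 : dot x1 z - dot xs z = - t * dot v z.
    by rewrite /x1 !dotE !mxE; ring.
  have e2 : dot y x1 - dot y xs = - t * dot y v.
    by rewrite /x1 !dotE !mxE; ring.
  have e3 : sq x1 - sq xs = -2 * t * dot xs v + t ^+ 2 * sq v.
    by rewrite /x1 !dotE !sqE !mxE; ring.
  have e4 : dot v (pi xs) - dot y v + eps * dot xs v = sq v.
    by rewrite /v !dotE !sqE !mxE; ring.
  have e5 : - (nv * (nv / 2)) < dot v z - dot v (pi xs).
    rewrite -dotBr.
    have := dot_abs_le v (z - pi xs); rewrite ler_norml => /andP[hh _].
    apply: (lt_le_trans _ hh); rewrite ltrN2 -/nv enormB ltr_pM2l //.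
  set P := dot v z - dot y v + eps * dot xs v.
  have hP : sq v / 2 < P.
    have : nv * (nv / 2) = sq v / 2 by rewrite sqv; ring.
    rewrite /P; lra.
  have main : 0 <= - t * P + eps / 2 * (t ^+ 2 * sq v).
    move: hm; rewrite /h fx1 /P => hm.
    have : eps / 2 * sq x1 - eps / 2 * sq xs = eps / 2 * (-2 * t * dot xs v + t ^+ 2 * sq v).
      by rewrite -e3; ring.
    have : - t * (dot v z - dot y v + eps * dot xs v) = - t * dot v z + t * dot y v - eps * t * dot xs v by ring.
    have : eps / 2 * (-2 * t * dot xs v + t ^+ 2 * sq v) = - eps * t * dot xs v + eps / 2 * (t ^+ 2 * sq v) by field.
    lra.
  have k1 : t * (sq v / 2) < t * P by rewrite ltr_pM2l.
  have k2 : eps / 2 * (t ^+ 2 * sq v) <= t * (sq v / 4).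
    have hs : 0 <= t * sq v / 2 by rewrite divr_ge0 // mulr_ge0 ?sq_ge0 // ltW.
    have := ler_wpM2r hs te.
    have -> : eps / 2 * (t ^+ 2 * sq v) = eps * t * (t * sq v / 2) by ring.
    have -> : t * (sq v / 4) = 1 / 2 * (t * sq v / 2) by field.
    by [].
  have : 0 < t * sq v by rewrite mulr_gt0.
  have : t * (sq v / 2) = t * sq v / 2 by ring.
  have : t * (sq v / 4) = t * sq v / 4 by ring.
  have : - t * P = - (t * P) by ring.
  lra.
have hp : y - pi xs = eps *: xs.
  apply/rowP => i; have := congr1 (fun w : V => w ord0 i) v0; rewrite /v !mxE => hh.
  lra.
exists (pi xs); split; first exact: pi_L.
rewrite hp enormZ ger0_norm ?ltW //.
have hrho : 0 <= rho by exact: sqrtr_ge0.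
apply: (le_lt_trans (ler_wpM2l (ltW eps0) Bxs)).
have Ke : 0 <= K / eps by rewrite divr_ge0 // ltW.
have er0 : 0 <= eps * rho by rewrite mulr_ge0 // ltW.
rewrite -(@ltr_pXn2r _ 2) ?nnegrE ?(ltW eta0) //.
rewrite exprMn /rho sqr_sqrtr //.
have -> : eps ^+ 2 * (K / eps) = eps * K by field; rewrite gt_eqF.
rewrite /eps.
have -> : eta ^+ 2 / (K + 1) * K = eta ^+ 2 * (K / (K + 1)) by ring.
have hK : K / (K + 1) < 1 by rewrite ltr_pdivrMr ?ltr_wpDl // mul1r ltrDl.
rewrite -[X in _ < X]mulr1 ltr_pM2l // exprn_gt0 //.
Qed.


End Cheb.

Section Curve.
Variable R : realType.
Notation V := 'rV[R]_3.

Lemma cont_dot_aff (u a : V) : continuous (fun x : V => dot u (x - a)).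
Proof.
move=> x; apply: cont_eps => e e0.
exists (e / (enorm u + 1)); first by rewrite divr_gt0 // ltr_wpDl ?enorm_ge0.
move=> x' hx.
have -> : dot u (x - a) - dot u (x' - a) = dot u (x - x') by rewrite !dotE !mxE; ring.
apply: (le_lt_trans (dot_abs_le _ _)).
rewrite ltr_pdivlMr ?ltr_wpDl ?enorm_ge0 // in hx.
have hu := enorm_ge0 u; have hx0 := enorm_ge0 (x - x').
have : enorm u * enorm (x - x') <= enorm (x - x') * (enorm u + 1) by nra.
lra.
Qed.

Lemma cont_seg (p1 p2 : V) : continuous (fun l : R => (1 - l) *: p1 + l *: p2).
Proof.
move=> l B /enorm_nbhs [d d0 Hd].
rewrite -filter_from_norm_nbhs.
exists (d / (enorm (p2 - p1) + 1)); first by rewrite /= divr_gt0 // ltr_wpDl ?enorm_ge0.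
move=> m /= hm; apply: Hd.
have -> : (1 - l) *: p1 + l *: p2 - ((1 - m) *: p1 + m *: p2) = (l - m) *: (p2 - p1).
  by apply/rowP => i; rewrite !mxE; ring.
rewrite enormZ.
rewrite ltr_pdivlMr ?ltr_wpDl ?enorm_ge0 // in hm.
have hu := enorm_ge0 (p2 - p1); have hx0 : 0 <= `|l - m| by [].
have : `|l - m| * enorm (p2 - p1) <= `|l - m| * (enorm (p2 - p1) + 1) by nra.
lra.
Qed.

Lemma link_not_cheb (L : set V) : link L ->
  ~ (forall x, exists y, nearest L x y /\ forall y', nearest L x y' -> y' = y).
Proof.
move=> hL cheb.
have cL := link_compact hL.
move: (hL) => [n [C [n0 [hC [hdisj hLC]]]]].
set i0 := Ordinal n0.
have [g [cg [gp [ginj hg]]]] := hC i0.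
have g1 : g 1 = g 0 by rewrite -[1]add0r gp.
have in01 (s : R) : 0 <= s -> s < 1 -> s \in `[0, 1[%classic.
  by move=> h0 h1; apply: mem_set; rewrite /= in_itv /= h0 h1.
have gC (s : R) : 0 <= s -> s < 1 -> C i0 (g s).
  by move=> h0 h1; rewrite hg; exists s => //; rewrite /= in_itv /= h0 h1.
have CL : C i0 `<=` L by rewrite hLC => z Cz; exists i0.
set a := g 0; set b := g (1 / 2).
have h12 : (1 / 2 : R) < 1 by rewrite ltr_pdivrMr // mul1r ltr1n.
have h12p : (0 : R) < 1 / 2 by rewrite divr_gt0.
have ab : a != b.
  apply/eqP => hab; have := ginj 0 (1/2) (in01 _ (lexx 0) ltr01) (in01 _ (ltW h12p) h12) hab.
  by move/eqP; rewrite eq_sym gt_eqF.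
have sab : 0 < sq (b - a).
  rewrite lt_def sq_ge0 andbT; apply/eqP => /sq_eq0 /eqP; rewrite subr_eq0 eq_sym.
  by apply/negP.
pose phi s := dot (b - a) (g s - a).
have cphi : continuous phi.
  move=> s; apply: (@continuous_comp _ _ _ g (fun z : V => dot (b - a) (z - a)) s).
    exact: cg.
  exact: cont_dot_aff.
set c := sq (b - a) / 2.
have phi0 : phi 0 = 0 by rewrite /phi subrr dot0r.
have phi1 : phi 1 = 0 by rewrite /phi g1 subrr dot0r.
have phih : phi (1 / 2) = sq (b - a) by rewrite /phi dotvv.
have c0 : 0 < c by rewrite /c divr_gt0.
have csab : c < sq (b - a) by rewrite /c ltr_pdivrMr // ltr_pMr // ltr1n.
have [s1 s1i phs1] : exists2 s1, s1 \in `[0, 1 / 2] & phi s1 = c.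
  apply: IVT; [exact: ltW | exact: continuous_subspaceT |].
  rewrite phi0 phih; apply/andP; split.
    by rewrite ge_min (ltW c0).
  by rewrite le_max (ltW csab) orbT.
have [s2 s2i phs2] : exists2 s2, s2 \in `[1 / 2, 1] & phi s2 = c.
  apply: IVT; [exact: ltW | exact: continuous_subspaceT |].
  rewrite phi1 phih; apply/andP; split.
    by rewrite ge_min (ltW c0) orbT.
  by rewrite le_max (ltW csab).
move: s1i s2i; rewrite !in_itv /= => /andP[s10 s11] /andP[s20 s21].
have s1n0 : s1 != 0 by apply/eqP => h; move: phs1; rewrite h phi0; lra.
have s1nh : s1 != 1 / 2 by apply/eqP => h; move: phs1; rewrite h phih; lra.
have s2n1 : s2 != 1 by apply/eqP => h; move: phs2; rewrite h phi1; lra.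
have s2nh : s2 != 1 / 2 by apply/eqP => h; move: phs2; rewrite h phih; lra.
have s1p : 0 < s1 by rewrite lt_neqAle eq_sym s1n0.
have s1h : s1 < 1 / 2 by rewrite lt_neqAle s1nh.
have s2h : 1 / 2 < s2 by rewrite lt_neqAle eq_sym s2nh.
have s2l : s2 < 1 by rewrite lt_neqAle s2n1.
set p1 := g s1; set p2 := g s2.
have Lp1 : L p1 by apply: CL; apply: gC; lra.
have Lp2 : L p2 by apply: CL; apply: gC; lra.
pose q (l : R) : V := (1 - l) *: p1 + l *: p2.
pose S := q @` `[0, 1].
have hSL l : 0 <= l -> l <= 1 -> L (q l) by move=> l0 l1; exact: (cheb_conv cL cheb).
have hSphi l : dot (b - a) (q l - a) = c.
  have -> : dot (b - a) (q l - a) = (1 - l) * dot (b - a) (p1 - a) + l * dot (b - a) (p2 - a).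
    by rewrite /q !dotE !mxE; ring.
  by move: phs1 phs2; rewrite /phi -/p1 -/p2 => -> ->; ring.
pose O := \bigcup_(j in [set j | j != i0]) C j.
have LCO : L `<=` C i0 `|` O.
  rewrite hLC => w [j _ Cw]; have [ej|jn] := eqVneq j i0; first by left; rewrite -ej.
  by right; exists j.
have dj j w : j != i0 -> C j w -> C i0 w -> False.
  move=> jn Cjw Ciw; have : (C i0 `&` C j) w by split.
  by rewrite hdisj // eq_sym.
have clO : closed O.
  apply: compact_closed; first exact: norm_hausdorff.
  have -> : O = \big[setU/set0]_(j <- index_enum 'I_n | j != i0) C j.
    apply/seteqP; split.
      move=> w [j /= jn Cw]; rewrite big_mkcond (bigD1_seq j) ?mem_index_enum ?index_enum_uniq //= jn.
      by left.
    apply: (big_ind (fun T => T `<=` O)) => //.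
      by move=> A B hA hB w [/hA|/hB].
    by move=> j jn w Cw; exists j.
  by apply: bigsetU_compact => j _; exact: closed_curve_compact.
pose A1 := g @` `[0, 1 / 2]; pose A2 := g @` `[1 / 2, 1].
have clA1 : closed A1 by exact: img_closed.
have clA2 : closed A2 by exact: img_closed.
pose U' := g @` `]0, 1 / 2[; pose V' := g @` `]1 / 2, 1[.
pose E := fun bb : bool => if bb then S `&` (V' `|` O) else S `&` U'.
have hconn : connected S.
  apply: connected_continuous_connected; first exact: segment_connected.
  by apply: continuous_subspaceT => x; apply: (@cont_seg p1 p2 x).
suff : ~ connected S by []. apply/connectedPn; exists E; split.
- case => /=.
  + exists p2; split; first by exists 1; [rewrite /= in_itv /= ler01 lexx | rewrite /q /= subrr scale0r add0r scale1r].
    by left; exists s2; rewrite //= in_itv /= s2h s2l.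
  + exists p1; split; first by exists 0; [rewrite /= in_itv /= ler01 lexx | rewrite /q /= subr0 scale0r addr0 scale1r].
    by exists s1; rewrite //= in_itv /= s1p s1h.
- apply/seteqP; split; last by move=> w /= [[]|[]].
  move=> w Sw; have := Sw; move=> [l /=]; rewrite /= in_itv /= => /andP[l0 l1] qw.
  have Lw : L w by rewrite -qw; exact: hSL.
  have phw : dot (b - a) (w - a) = c by rewrite -qw; exact: hSphi.
  case: (LCO _ Lw) => [|Ow]; last by right; split => //; right.
  rewrite hg => -[s /=]; rewrite /= in_itv /= => /andP[s0 s1'] gw.
  have sn0 : s != 0 by apply/eqP => h; move: phw; rewrite -gw h subrr dot0r; lra.
  have snh : s != 1 / 2.
    by apply/eqP => h; move: phw; rewrite -gw h -/b dotvv; lra.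
  have [sh|hs] := ltrP s (1 / 2).
    left; split => //; exists s => //; rewrite /= in_itv /= sh andbT lt_neqAle eq_sym sn0 s0.
    by [].
  right; split => //; left; exists s => //; rewrite /= in_itv /= s1' andbT lt_neqAle eq_sym snh hs.
  by [].
- split.
  + apply/seteqP; split => [w [hc [_ hw]]|//]; exfalso.
    have : closure (E false) `<=` A1.
      move=> z /(closure_subset (B := A1)) h; apply: clA1; apply: h.
      move=> u /= [_ [t]]; rewrite /= in_itv /= => /andP[t0 t1] <-.
      by exists t; rewrite //= in_itv /= ltW // ltW.
    move=> /(_ w hc) [s]; rewrite /= in_itv /= => /andP[s0 s1'] gw.
    case: hw => [[s' ]|[j /= jn Cjw]].
      rewrite /= in_itv /= => /andP[s'0 s'1] gw'.
      have := ginj s s' (in01 _ s0 (le_lt_trans s1' h12)) (in01 _ (ltW (lt_trans h12p s'0)) s'1).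
      by rewrite gw gw' => /(_ erefl) hss; move: s'0; rewrite -hss; lra.
    by apply: (dj j w jn Cjw); rewrite -gw; apply: gC => //; lra.
  + apply/seteqP; split => [w [[_ hw] hc]|//]; exfalso.
    have : closure (E true) `<=` A2 `|` O.
      move=> z /(closure_subset (B := A2 `|` O)) h; apply: (closedU clA2 clO); apply: h.
      move=> u /= [_ [[t]|Ou]]; last by right.
      rewrite /= in_itv /= => /andP[t0 t1] <-.
      by left; exists t; rewrite //= in_itv /= ltW // ltW.
    move: hw => [s]; rewrite /= in_itv /= => /andP[s0 s1'] gw.
    move=> /(_ w hc) [[s']|[j /= jn Cjw]].
      rewrite /= in_itv /= => /andP[s'0 s'1] gw'.
      have [s'e|s'n] := eqVneq s' 1.
        move: gw'; rewrite s'e g1 => gw'.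
        have := ginj s 0 (in01 _ (ltW s0) (lt_trans s1' h12)) (in01 _ (lexx 0) ltr01).
        by rewrite gw gw' => /(_ erefl) hss; move: s0; rewrite hss ltxx.
      have s'l : s' < 1 by rewrite lt_neqAle s'n.
      have := ginj s s' (in01 _ (ltW s0) (lt_trans s1' h12)) (in01 _ (le_trans (ltW h12p) s'0) s'l).
      by rewrite gw gw' => /(_ erefl) hss; move: s'0; rewrite -hss; lra.
    by apply: (dj j w jn Cjw); rewrite -gw; apply: gC; lra.
Qed.

End Curve.

Section Scale.
Variable R : realType.
Notation V := 'rV[R]_3.

Lemma Thi_fin (L : set V) : link L -> (Thi L < +oo)%E.
Proof.
move=> hL; rewrite ltNge leye_eq; apply/negP => /eqP hT.
apply: (link_not_cheb hL) => x.
have [z0 Lz0] := link_nonempty hL.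
have : ((enorm (x - z0))%:E < Thi L)%E by rewrite hT ltry.
move=> /ereal_sup_gt [_ [e [e0 he] <-]]; rewrite lte_fin => hxe.
apply: he; exists z0; split => //.
Qed.

Definition scl (c : R) (A : set V) := [set c *: z | z in A].

Lemma scl_inv c (A : set V) : c != 0 -> scl c^-1 (scl c A) = A.
Proof.
move=> c0; apply/seteqP; split.
  by move=> _ [_ [z Az <-] <-]; rewrite scalerA mulVf // scale1r.
by move=> z Az; exists (c *: z); [exists z | rewrite scalerA mulVf // scale1r].
Qed.

Lemma nearest_scl c (A : set V) x y : 0 < c -> nearest A x y -> nearest (scl c A) (c *: x) (c *: y).
Proof.
move=> c0 [Ay H]; split; first by exists y.
move=> _ [z Az <-]; rewrite -!scalerBr !enormZ ler_pM2l ?normr_gt0 ?gt_eqF //.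
exact: H.
Qed.

Lemma unw_scl c (A : set V) e : 0 < c -> unique_nearest_within A e ->
  unique_nearest_within (scl c A) (c * e).
Proof.
move=> c0 H X [_ [[y Ay <-] hXy]].
have cn0 : c != 0 by rewrite gt_eqF.
set x := c^-1 *: X.
have Xx : X = c *: x by rewrite /x scalerA mulfV // scale1r.
have : enorm (x - y) < e.
  move: hXy; rewrite Xx -scalerBr enormZ gtr0_norm // ltr_pM2l //.
move=> hxy; have [y0 [ny0 uy0]] := H x (ex_intro _ y (conj Ay hxy)).
exists (c *: y0); split; first by rewrite Xx; exact: nearest_scl.
move=> Y' nY'.
have : nearest A x (c^-1 *: Y').
  have ci0 : 0 < c^-1 by rewrite invr_gt0.
  have := nearest_scl ci0 nY'.
  by rewrite scl_inv // -Xx.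
by move/uy0 => <-; rewrite scalerA mulfV // scale1r.
Qed.

Definition Sset (A : set V) := [set e : R | 0 <= e /\ unique_nearest_within A e].

Lemma Thi_scl c (A : set V) : 0 < c -> Thi (scl c A) = (c%:E * Thi A)%E.
Proof.
move=> c0; rewrite /Thi -ereal_sup_pZl //; congr ereal_sup.
have cn0 : c != 0 by rewrite gt_eqF.
apply/seteqP; split.
  move=> _ [e [e0 he] <-]; exists (c^-1 * e)%:E; last by rewrite -EFinM mulrA mulfV // mul1r.
  exists (c^-1 * e) => //; split; first by rewrite mulr_ge0 // invr_ge0 ltW.
  have ci0 : 0 < c^-1 by rewrite invr_gt0.
  by have := unw_scl ci0 he; rewrite scl_inv.
move=> _ [_ [e [e0 he] <-] <-]; exists (c * e); last by [].
by split; [rewrite mulr_ge0 // ltW | exact: unw_scl].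
Qed.

End Scale.

Section Calc.
Variable R : realType.

Section Aff.
Variables (U W : normedModType R).

Lemma aff_diff (L : {linear U -> W}) (c : W) x : continuous L ->
  differentiable (fun y => L y + c) x.
Proof.
move=> cL; apply: differentiableD; last exact: differentiable_cst.
exact: linear_differentiable.
Qed.

Lemma aff_derive (L : {linear U -> W}) (c : W) x v : continuous L ->
  'D_v (fun y => L y + c) x = L v.
Proof.
move=> cL; rewrite deriveE; last exact: aff_diff.
rewrite diffD; [|exact: linear_differentiable|exact: differentiable_cst].
by rewrite diff_lin // diff_cst /= addr0.
Qed.

Lemma cst_C1 (D : set U) (c : W) : C1_on D (fun _ : U => c).
Proof.
move=> x _; split; first exact: differentiable_cst.
move=> v; have -> : 'D_v (fun _ : U => c) = fun _ => 0.
  by apply: funext => y; exact: derive_cst.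
exact: cst_continuous.
Qed.

Lemma aff_C1 (D : set U) (L : {linear U -> W}) (c : W) : continuous L ->
  C1_on D (fun y => L y + c).
Proof.
move=> cL x _; split; first exact: aff_diff.
move=> v; have -> : 'D_v (fun y => L y + c) = fun _ => L v.
  by apply: funext => y; exact: aff_derive.
exact: cst_continuous.
Qed.

Lemma aff_C2 (D : set U) (L : {linear U -> W}) (c : W) : continuous L ->
  C2_on D (fun y => L y + c).
Proof.
move=> cL; split; first exact: aff_C1.
move=> v; have -> : 'D_v (fun y => L y + c) = fun _ => L v.
  by apply: funext => y; exact: aff_derive.
exact: cst_C1.
Qed.
End Aff.


Lemma lin_C2 (U W : normedModType R) (D : set U) (f : U -> W) : linear f -> continuous f -> C2_on D f.
Proof.
move=> flin fc.
pose fL : {linear U -> W} := HB.pack f (GRing.isLinear.Build _ _ _ _ f flin).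
have -> : f = fun y => fL y + 0 by apply: funext => y; rewrite addr0.
by apply: aff_C2 => x; apply: fc.
Qed.

Notation V := 'rV[R]_3.

Definition scl2 (k : R) (x : V) : V := k *: x.
Lemma scl2_is_bilinear :
  bilinear_for
    (GRing.Scale.Law.clone _ _ *:%R _) (GRing.Scale.Law.clone _ _ *:%R _)
    scl2.
Proof.
split=> [u'|u] a x y /=; rewrite /scl2.
- by rewrite scalerDl scalerA.
- by rewrite scalerDr !scalerA mulrC.
Qed.
HB.instance Definition _ := bilinear_isBilinear.Build R R V V _ _ scl2 scl2_is_bilinear.

Lemma cont_fst (p : R * V) : {for p, continuous fst}.
Proof. exact: cvg_fst. Qed.
Lemma cont_snd (p : R * V) : {for p, continuous snd}.
Proof. exact: cvg_snd. Qed.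

Lemma scl2_cont : continuous (fun p : R * V => scl2 p.1 p.2).
Proof. move=> p; apply: continuousZ; [exact: cont_fst | exact: cont_snd]. Qed.

Lemma snd_lin : linear (@snd R V).
Proof. by move=> a u v. Qed.

Definition sndV (p : R * V) : V := p.2.
Lemma sndV_lin : linear sndV.
Proof. by move=> a u v. Qed.
HB.instance Definition _ := GRing.isLinear.Build R (R * V)%type V _ sndV sndV_lin.
Lemma cont_sndV : continuous sndV.
Proof. exact: cont_snd. Qed.

Definition Fam (p : R * V) : V := (1 + p.1) *: p.2.

Lemma Fam_eq : Fam = fun p => scl2 p.1 p.2 + sndV p.
Proof. by apply: funext => p; rewrite /Fam /scl2 scalerDl scale1r addrC. Qed.

Lemma Fam_diff p : differentiable Fam p.
Proof.
rewrite Fam_eq; apply: differentiableD.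
  apply: (@differentiable_bilin _ _ _ _ scl2); exact: scl2_cont.
apply: (@linear_differentiable _ _ _ sndV); exact: cont_sndV.
Qed.

End Calc.

Section Calc2.
Variable R : realType.
Notation V := 'rV[R]_3.

Lemma Fam_derive (p : R * V) v : 'D_v (@Fam R) p = (p.1 *: v.2 + v.1 *: p.2) + v.2.
Proof.
rewrite deriveE; last exact: Fam_diff.
rewrite Fam_eq.
have d1 : differentiable (fun p : R * V => scl2 p.1 p.2) p.
  apply: (@differentiable_bilin _ _ _ _ (@scl2 R)); exact: scl2_cont.
have d2 : differentiable (@sndV R) p.
  apply: (@linear_differentiable _ _ _ (@sndV R)); exact: cont_sndV.
have -> : (fun p0 : R * V => scl2 p0.1 p0.2 + sndV p0) = (fun p0 => scl2 p0.1 p0.2) + (@sndV R) by [].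
rewrite (diffD d1 d2).
have e1 : 'd (fun p0 : R * V => scl2 p0.1 p0.2) p = (fun q : R * V => scl2 p.1 q.2 + scl2 q.1 p.2) :> (R * V -> V)
  := @diff_bilin _ _ _ _ (@scl2 R) p (@scl2_cont R).
have e2 : 'd (@sndV R) p = (@sndV R) :> (R * V -> V) := @diff_lin _ _ _ (@sndV R) p (@cont_sndV R).
have h1 := congr1 (fun F => F v) e1.
have h2 := congr1 (fun F => F v) e2.
simpl in h1, h2.
etransitivity; first exact: (congr2 +%R h1 h2).
rewrite /scl2 /sndV /=.
by [].
Qed.
End Calc2.

Section Calc3.
Variable R : realType.
Notation V := 'rV[R]_3.

Definition LamV (v : R * V) (q : R * V) : V := q.1 *: v.2 + v.1 *: q.2.
Lemma LamV_lin v : linear (LamV v).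
Proof.
move=> a u w; rewrite /LamV /=; apply/rowP => i; rewrite !mxE /=.
have -> : a *: u.1 = a * u.1 by []. ring.
Qed.
HB.instance Definition _ v := GRing.isLinear.Build R (R * V)%type V _ (LamV v) (LamV_lin v).

Lemma LamV_cont v : continuous (LamV v).
Proof.
move=> p; rewrite /LamV.
apply: (@continuousD _ _ _ (fun q : R * V => q.1 *: v.2) (fun q : R * V => v.1 *: q.2)).
  apply: (@continuousZ _ _ _ fst (fun=> v.2)); [exact: cont_fst | exact: cst_continuous].
apply: (@continuousZ _ _ _ (fun=> v.1) snd); [exact: cst_continuous | exact: cont_snd].
Qed.

Lemma DFam v : 'D_v (@Fam R) = fun p => LamV v p + v.2.
Proof. by apply: funext => p; rewrite Fam_derive. Qed.

Lemma Fam_C2 (D : set (R * V)) : C2_on D (@Fam R).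
Proof.
split.
  move=> p _; split; first exact: Fam_diff.
  move=> v; rewrite DFam.
  apply: differentiable_continuous; apply: aff_diff; exact: LamV_cont.
move=> v; rewrite DFam; apply: aff_C1; exact: LamV_cont.
Qed.

End Calc3.

Section Final.
Variable R : realType.
Notation V := 'rV[R]_3.

Definition sclx (x : V) (t : R) : V := t *: x.
Lemma sclx_lin x : linear (sclx x).
Proof. by move=> a u w; rewrite /sclx scalerDl scalerA. Qed.
HB.instance Definition _ x := GRing.isLinear.Build R R V _ (sclx x) (sclx_lin x).

Lemma scal_lin (k : R) : linear (fun x : V => k *: x).
Proof. by move=> a u w; rewrite scalerDr !scalerA mulrC. Qed.

Lemma scal_C2 (k : R) : C2_on setT (fun x : V => k *: x).
Proof. apply: lin_C2; [exact: scal_lin | exact: scaler_continuous]. Qed.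

Definition phiF (t : R) (x : V) : V := (1 + t) *: x.

Lemma phiF_diffeo t : 1 + t != 0 -> C2_diffeo (phiF t).
Proof.
move=> t0; split; first exact: scal_C2.
exists (fun x => (1 + t)^-1 *: x); split; [|split].
- by move=> x; rewrite /phiF scalerA mulVf // scale1r.
- by move=> x; rewrite /phiF scalerA mulfV // scale1r.
- exact: scal_C2.
Qed.

Lemma phiF_family : diffeo_family phiF.
Proof.
exists (1 / 2); split; first by rewrite divr_gt0.
split.
  move=> t ht; apply: phiF_diffeo; apply/eqP => h.
  move: ht; rewrite ltr_norml => /andP[h1 _]; lra.
split.
  by apply: funext => x; rewrite /phiF addr0 scale1r.
exact: Fam_C2.
Qed.

Lemma phiF_vel : initial_velocity phiF id.
Proof.
move=> x.
have -> : (fun t => phiF t x) = fun t => sclx x t + x.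
  by apply: funext => t; rewrite /phiF /sclx scalerDl scale1r addrC.
have cx : continuous (sclx x) by exact: scalel_continuous.
split.
  apply: diff_derivable; exact: aff_diff.
by rewrite aff_derive //; rewrite /= /sclx scale1r.
Qed.

Lemma phiF_thick (L : set V) : link L -> (0 < Thi L)%E -> thickening_field L id.
Proof.
move=> hL hT.
have hF := Thi_fin hL.
set T := thi L.
have TE : Thi L = T%:E by rewrite /T /thi fineK // ge0_fin_numE // ltW.
have T0 : 0 < T by rewrite -lte_fin -TE.
exists phiF; split; first exact: phiF_family.
split; first exact: phiF_vel.
exists T; split => //.
apply: cvg_near_cst; near=> t.
have t0 : 0 < t by near: t; exact: nbhs_right_gt.
have ht : thi (phiF t @` L) = (1 + t) * T.
  have -> : phiF t @` L = scl (1 + t) L by [].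
  by rewrite /thi Thi_scl ?TE // ltr_wpDr // ltW.
rewrite /= ht -/T. by field; rewrite gt_eqF.
Unshelve. all: by end_near.
Qed.

Lemma lemma3p7_aux (L : set 'rV[R]_3) :
  link L -> (0 < Thi L)%E ->
  regular L /\
  (forall G : set 'M[R]_3, subgroup_O3 G -> G_invariant_set G L -> G_regular G L).
Proof.
move=> hL hT; split.
  by exists id; exact: phiF_thick.
move=> G _ _; exists id; split; last exact: phiF_thick.
by move=> g x _.
Qed.

End Final.

Unset Implicit Arguments.

Theorem lemma3p7 (R : realType) (L : set 'rV[R]_3) :
  link L -> (0 < Thi L)%E ->
  regular L /\
  (forall G : set 'M[R]_3, subgroup_O3 G -> G_invariant_set G L -> G_regular G L).
Proof. exact: (@lemma3p7_aux R L). Qed.
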